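(* The functor $\pi\colon\mathrm{EEED}\to\mathrm{ED}$ is essentially surjective and reflects isomorphisms. Moreover, for any $N,N'\in\mathrm{EEED}$ there is a natural short exact sequence \[ 0\to\mathrm{Hom}(\alpha(N)[2],\gamma(N')/2)\xrightarrow{\xi}\mathrm{EEED}(N,N')\xrightarrow{\pi}\mathrm{ED}(\pi(N),\pi(N'))\to 0. \] (In particular, $\pi$ is full.)
   Context: For an abelian group $U$, $U[2]=\{u:2u=0\}$ and $U/2=U/2U$. An extended $\eta$-diagram is a diagram of abelian groups $B\xrightarrow{\psi}A\xrightarrow{\eta}C\xrightarrow{\chi}B$ with $2\eta=0$, $\psi\chi=0$ and $\chi\eta\psi=2\cdot1_B$; write it $N=(A,B,C,\eta,\chi,\psi)$. A morphism $N\to N'$ is a triple $(f,g,h)$ with $f\colon A\to A'$, $g\colon B\to B'$, $h\colon C\to C'$, $f\psi=\psi'g$, $h\eta=\eta'f$, $g\chi=\chi'h$. One has $2\psi=0=2\chi$, so there are induced maps $C/2\xrightarrow{\chi}B\xrightarrow{\psi}A[2]$; $N$ is exact if this sequence is short exact. $\mathrm{EEED}$ is the category of exact extended $\eta$-diagrams. An $\eta$-diagram is a homomorphism $\eta\colon A\to C$ with $2\eta=0$; morphisms are pairs $(f,h)$ with $h\eta=\eta'f$; this category is $\mathrm{ED}$. The functor $\pi$ sends $N$ to $(A\xrightarrow{\eta}C)$ and $(f,g,h)$ to $(f,h)$; $\alpha(N)=A$, $\gamma(N)=C$. For $u\colon A[2]\to C'/2$, $\xi(u)$ is the morphism $(0,\bar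 u,0)\colon N\to N'$ where $\bar u$ is the composite $B\xrightarrow{\psi}A[2]\xrightarrow{u}C'/2\xrightarrow{\chi'}B'$. *)

(* Defs.v *)
(* Abelian groups are modelled as MathComp [zmodType]s,
   homomorphisms as functions together with a [zmod_morphism] proof. *)
From HB Require Import structures.
From mathcomp Require Import all_boot all_algebra.
From mathcomp Require Import boolp.

Set Implicit Arguments.
Unset Strict Implicit.
Unset Printing Implicit Defensive.

Import GRing.Theory.
Local Open Scope ring_scope.
Local Open Scope quotient_scope.

Lemma zmod_morph0 (U V : zmodType) (f : U -> V) :
  zmod_morphism f -> f 0 = 0.
Proof. by move=> hf; rewrite -(subrr (0 : U)) hf subrr. Qed.

Lemma zmod_morphN (U V : zmodType) (f : U -> V) :
  zmod_morphism f -> forall x, f (- x) = - f x.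
Proof. by move=> hf x; rewrite -sub0r hf zmod_morph0 // sub0r. Qed.

Lemma zmod_morphD (U V : zmodType) (f : U -> V) :
  zmod_morphism f -> forall x y, f (x + y) = f x + f y.
Proof.
move=> hf x y; have h : f (x - - y) = f x - f (- y) := hf x (- y).
by rewrite opprK in h; rewrite (zmod_morphN hf) opprK in h.
Qed.

Lemma zmod_morphMn (U V : zmodType) (f : U -> V) :
  zmod_morphism f -> forall x n, f (x *+ n) = f x *+ n.
Proof.
move=> hf x; elim=> [|n IH]; first by rewrite !mulr0n zmod_morph0.
by rewrite !mulrS zmod_morphD // IH.
Qed.

Lemma zmod_morphism_comp (U V W : zmodType) (g : V -> W) (f : U -> V) :
  zmod_morphism g -> zmod_morphism f -> zmod_morphism (g \o f).
Proof. by move=> hg hf x y /=; rewrite hf hg. Qed.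

Lemma zmod_morphism_id (U : zmodType) : zmod_morphism (@id U).
Proof. by []. Qed.

Lemma zmod_morphism_zero (U V : zmodType) : zmod_morphism (fun _ : U => 0 : V).
Proof. by move=> x y; rewrite subrr. Qed.

Lemma zmod_morphism_add (U V : zmodType) (f g : U -> V) :
  zmod_morphism f -> zmod_morphism g -> zmod_morphism (f \+ g).
Proof. by move=> hf hg x y /=; rewrite hf hg opprD addrACA. Qed.

Section Tors2.
Variable A : zmodType.

Definition is2tors : {pred A} := fun x => x *+ 2 == 0.

Fact is2tors_zmod_closed : zmod_closed is2tors.
Proof.
split=> [|x y]; rewrite /in_mem /= /is2tors; first by rewrite mul0rn.
by move=> /eqP hx /eqP hy; rewrite mulrnBl hx hy subrr.
Qed.

HB.instance Definition _ :=
  GRing.isZmodClosed.Build A is2tors is2tors_zmod_closed.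

Record tors2 := Tors2 { t2val :> A; t2P : t2val \in is2tors }.

HB.instance Definition _ := [isSub for t2val].
HB.instance Definition _ := [Choice of tors2 by <:].
HB.instance Definition _ := [SubChoice_isSubZmodule of tors2 by <:].

End Tors2.

Section Mod2.
Variable C : zmodType.

Definition mod2rel (x y : C) : bool := `[< exists z, x - y = z *+ 2 >].

Lemma mod2relP x y : reflect (exists z, x - y = z *+ 2) (mod2rel x y).
Proof. exact: asboolP. Qed.

Fact mod2rel_refl : reflexive mod2rel.
Proof. by move=> x; apply/mod2relP; exists 0; rewrite subrr mul0rn. Qed.

Fact mod2rel_sym : symmetric mod2rel.
Proof.
move=> x y; apply/mod2relP/mod2relP=> -[z h]; exists (- z);
  by rewrite mulNrn -h opprB.
Qed.

Fact mod2rel_trans : transitive mod2rel.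
Proof.
move=> y x z /mod2relP[a ha] /mod2relP[b hb]; apply/mod2relP; exists (a + b).
by rewrite mulrnDl -ha -hb addrA subrK.
Qed.

Canonical mod2rel_equiv :=
  EquivRel mod2rel mod2rel_refl mod2rel_sym mod2rel_trans.

Definition mod2 := {eq_quot mod2rel}.
HB.instance Definition _ := Choice.on mod2.
HB.instance Definition _ := Quotient.on mod2.

Lemma repr_pi2 (x : C) : mod2rel (repr (\pi_mod2 x)) x.
Proof. by apply/eqmodP; rewrite reprK. Qed.

Definition mod2_zero : mod2 := \pi_mod2 0.
Definition mod2_add (p q : mod2) : mod2 := \pi_mod2 (repr p + repr q).
Definition mod2_opp (p : mod2) : mod2 := \pi_mod2 (- repr p).

Lemma mod2_addpi x y : mod2_add (\pi_mod2 x) (\pi_mod2 y) = \pi_mod2 (x + y).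
Proof.
apply/eqmodP; have /mod2relP[a ha] := repr_pi2 x.
have /mod2relP[b hb] := repr_pi2 y; apply/mod2relP; exists (a + b).
by rewrite mulrnDl -ha -hb opprD addrACA.
Qed.

Lemma mod2_opppi x : mod2_opp (\pi_mod2 x) = \pi_mod2 (- x).
Proof.
apply/eqmodP; have /mod2relP[a ha] := repr_pi2 x; apply/mod2relP.
by exists (- a); rewrite mulNrn -ha opprK opprB addrC.
Qed.

Fact mod2_addA : associative mod2_add.
Proof.
move=> x y z; elim/(@quotW _ mod2): x => x; elim/(@quotW _ mod2): y => y; elim/(@quotW _ mod2): z => z.
by rewrite !mod2_addpi addrA.
Qed.

Fact mod2_addC : commutative mod2_add.
Proof.
move=> x y; elim/(@quotW _ mod2): x => x; elim/(@quotW _ mod2): y => y.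
by rewrite !mod2_addpi addrC.
Qed.

Fact mod2_add0 : left_id mod2_zero mod2_add.
Proof. by move=> x; elim/(@quotW _ mod2): x => x; rewrite /mod2_zero mod2_addpi add0r. Qed.

Fact mod2_addN : left_inverse mod2_zero mod2_opp mod2_add.
Proof. by move=> x; elim/(@quotW _ mod2): x => x; rewrite mod2_opppi mod2_addpi addNr. Qed.

HB.instance Definition _ :=
  GRing.isZmodule.Build mod2 mod2_addA mod2_addC mod2_add0 mod2_addN.

End Mod2.

Section Induced.
Variables (U V : zmodType) (f : U -> V) (hf : zmod_morphism f).

Fact tors2map_subproof (a : tors2 U) : f (t2val a) \in @is2tors V.
Proof.
have /eqP h := t2P a; apply/eqP.
by rewrite -zmod_morphMn // h zmod_morph0.
Qed.

Definition tors2map (a : tors2 U) : tors2 V := Tors2 (tors2map_subproof a).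

End Induced.

Definition mod2map (U V : zmodType) (f : U -> V) (q : mod2 U) : mod2 V :=
  \pi_(mod2 V) (f (repr q)).

(* Extended eta-diagrams  B --psi--> A --eta--> C --chi--> B           *)

Record xdiag := XDiag {
  xA : zmodType; xB : zmodType; xC : zmodType;
  xeta : xA -> xC; xchi : xC -> xB; xpsi : xB -> xA;
  xeta_add : zmod_morphism xeta;
  xchi_add : zmod_morphism xchi;
  xpsi_add : zmod_morphism xpsi;
  xeta2 : forall a, xeta a *+ 2 = 0;
  xpsichi : forall c, xpsi (xchi c) = 0;
  xchietapsi : forall b, xchi (xeta (xpsi b)) = b *+ 2
}.

Arguments xeta : clear implicits.
Arguments xchi : clear implicits.
Arguments xpsi : clear implicits.
Arguments xeta_add : clear implicits.
Arguments xchi_add : clear implicits.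
Arguments xpsi_add : clear implicits.

Lemma xpsi2 (N : xdiag) (b : xB N) : xpsi N b *+ 2 = 0.
Proof.
by rewrite -(zmod_morphMn (xpsi_add N)) -xchietapsi xpsichi.
Qed.

Lemma xchi2 (N : xdiag) (c : xC N) : xchi N c *+ 2 = 0.
Proof.
by rewrite -xchietapsi xpsichi (zmod_morph0 (xeta_add N)) (zmod_morph0 (xchi_add N)).
Qed.

Definition psibar (N : xdiag) (b : xB N) : tors2 (xA N) :=
  @Tors2 _ (xpsi N b) (introT eqP (xpsi2 b) : xpsi N b \in @is2tors _).

Definition chibar (N : xdiag) (q : mod2 (xC N)) : xB N := xchi N (repr q).

Arguments chibar : clear implicits.

Definition xexact (N : xdiag) : Prop :=
  [/\ injective (chibar N),
      (forall b : xB N, psibar b = 0 <-> exists q, chibar N q = b)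
    & forall a : tors2 (xA N), exists b, psibar b = a].

Record ediag := EDiag {
  eA : zmodType; eC : zmodType;
  eeta : eA -> eC;
  eeta_add : zmod_morphism eeta;
  eeta2 : forall a, eeta a *+ 2 = 0
}.

Arguments eeta : clear implicits.
Arguments eeta_add : clear implicits.

Record xmor (N N' : xdiag) := XMor {
  mf : xA N -> xA N'; mg : xB N -> xB N'; mh : xC N -> xC N';
  mf_add : zmod_morphism mf;
  mg_add : zmod_morphism mg;
  mh_add : zmod_morphism mh;
  mfpsi : forall b, mf (xpsi N b) = xpsi N' (mg b);
  mheta : forall a, mh (xeta N a) = xeta N' (mf a);
  mgchi : forall c, mg (xchi N c) = xchi N' (mh c)
}.

Record emor (D D' : ediag) := EMor {
  ef : eA D -> eA D'; eh : eC D -> eC D';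
  ef_add : zmod_morphism ef;
  eh_add : zmod_morphism eh;
  eheta : forall a, eh (eeta D a) = eeta D' (ef a)
}.

Definition xmor_eq N N' (p q : xmor N N') : Prop :=
  [/\ forall a, mf p a = mf q a, forall b, mg p b = mg q b
    & forall c, mh p c = mh q c].
Definition emor_eq D D' (p q : emor D D') : Prop :=
  (forall a, ef p a = ef q a) /\ (forall c, eh p c = eh q c).

Definition xid (N : xdiag) : xmor N N :=
  @XMor N N id id id (@zmod_morphism_id _) (@zmod_morphism_id _)
    (@zmod_morphism_id _) (fun _ => erefl) (fun _ => erefl) (fun _ => erefl).

Section XComp.
Variables (N1 N2 N3 : xdiag) (q : xmor N2 N3) (p : xmor N1 N2).
Fact xcomp_psi b : (mf q \o mf p) (xpsi N1 b) = xpsi N3 ((mg q \o mg p) b).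
Proof. by rewrite /= mfpsi mfpsi. Qed.
Fact xcomp_eta a : (mh q \o mh p) (xeta N1 a) = xeta N3 ((mf q \o mf p) a).
Proof. by rewrite /= mheta mheta. Qed.
Fact xcomp_chi c : (mg q \o mg p) (xchi N1 c) = xchi N3 ((mh q \o mh p) c).
Proof. by rewrite /= mgchi mgchi. Qed.
Definition xcomp : xmor N1 N3 :=
  XMor (zmod_morphism_comp (mf_add q) (mf_add p))
       (zmod_morphism_comp (mg_add q) (mg_add p))
       (zmod_morphism_comp (mh_add q) (mh_add p))
       xcomp_psi xcomp_eta xcomp_chi.
End XComp.

Definition eid (D : ediag) : emor D D :=
  @EMor D D id id (@zmod_morphism_id _) (@zmod_morphism_id _) (fun _ => erefl).

Section EComp.
Variables (D1 D2 D3 : ediag) (q : emor D2 D3) (p : emor D1 D2).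
Fact ecomp_eta a : (eh q \o eh p) (eeta D1 a) = eeta D3 ((ef q \o ef p) a).
Proof. by rewrite /= eheta eheta. Qed.
Definition ecomp : emor D1 D3 :=
  EMor (zmod_morphism_comp (ef_add q) (ef_add p))
       (zmod_morphism_comp (eh_add q) (eh_add p)) ecomp_eta.
End EComp.

Definition xiso N N' (p : xmor N N') : Prop :=
  exists q : xmor N' N, xmor_eq (xcomp q p) (xid N) /\ xmor_eq (xcomp p q) (xid N').
Definition eiso D D' (p : emor D D') : Prop :=
  exists q : emor D' D, emor_eq (ecomp q p) (eid D) /\ emor_eq (ecomp p q) (eid D').

Section XAdd.
Variables (N N' : xdiag) (p q : xmor N N').
Fact xadd_psi b : (mf p \+ mf q) (xpsi N b) = xpsi N' ((mg p \+ mg q) b).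
Proof. by rewrite /= !mfpsi (zmod_morphD (xpsi_add N')). Qed.
Fact xadd_eta a : (mh p \+ mh q) (xeta N a) = xeta N' ((mf p \+ mf q) a).
Proof. by rewrite /= !mheta (zmod_morphD (xeta_add N')). Qed.
Fact xadd_chi c : (mg p \+ mg q) (xchi N c) = xchi N' ((mh p \+ mh q) c).
Proof. by rewrite /= !mgchi (zmod_morphD (xchi_add N')). Qed.
Definition xadd : xmor N N' :=
  XMor (zmod_morphism_add (mf_add p) (mf_add q))
       (zmod_morphism_add (mg_add p) (mg_add q))
       (zmod_morphism_add (mh_add p) (mh_add q))
       xadd_psi xadd_eta xadd_chi.
End XAdd.

Section EAdd.
Variables (D D' : ediag) (p q : emor D D').
Fact eadd_eta a : (eh p \+ eh q) (eeta D a) = eeta D' ((ef p \+ ef q) a).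
Proof. by rewrite /= !eheta (zmod_morphD (eeta_add D')). Qed.
Definition eadd : emor D D' :=
  EMor (zmod_morphism_add (ef_add p) (ef_add q))
       (zmod_morphism_add (eh_add p) (eh_add q)) eadd_eta.
End EAdd.

Definition piD (N : xdiag) : ediag := EDiag (xeta_add N) (@xeta2 N).
Definition piM N N' (p : xmor N N') : emor (piD N) (piD N') :=
  @EMor (piD N) (piD N') (mf p) (mh p) (mf_add p) (mh_add p) (mheta p).

Definition alpha (N : xdiag) := xA N.
Definition gamma (N : xdiag) := xC N.

Lemma mod2_piB (C : zmodType) (x y : C) :
  \pi_(mod2 C) (x - y) = \pi_(mod2 C) x - \pi_(mod2 C) y.
Proof.
have -> : \pi_(mod2 C) x - \pi_(mod2 C) y
        = mod2_add (\pi_(mod2 C) x) (mod2_opp (\pi_(mod2 C) y)) by [].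
by rewrite mod2_opppi mod2_addpi.
Qed.

Lemma mod2map_pi (U V : zmodType) (f : U -> V) (hf : zmod_morphism f) x :
  mod2map f (\pi_(mod2 U) x) = \pi_(mod2 V) (f x).
Proof.
apply/eqmodP; have /mod2relP[a ha] := repr_pi2 x; apply/mod2relP.
by exists (f a); rewrite -hf ha (zmod_morphMn hf).
Qed.

Lemma mod2map_add (U V : zmodType) (f : U -> V) :
  zmod_morphism f -> zmod_morphism (mod2map f).
Proof.
move=> hf p q; elim/(@quotW _ (mod2 U)): p => x; elim/(@quotW _ (mod2 U)): q => y.
by rewrite -mod2_piB !(mod2map_pi hf) hf mod2_piB.
Qed.

Lemma tors2map_add (U V : zmodType) (f : U -> V) (hf : zmod_morphism f) :
  zmod_morphism (tors2map hf).
Proof. by move=> a b; apply: val_inj; rewrite /= hf. Qed.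

Lemma psibar_add (N : xdiag) : zmod_morphism (@psibar N).
Proof. by move=> a b; apply: val_inj; rewrite /= (xpsi_add N). Qed.

Lemma chibar_pi (N : xdiag) (x : xC N) : chibar N (\pi_(mod2 (xC N)) x) = xchi N x.
Proof.
have /mod2relP[a ha] := repr_pi2 x; apply/eqP; rewrite -subr_eq0.
by rewrite /chibar -(xchi_add N) ha (zmod_morphMn (xchi_add N)) xchi2.
Qed.

Lemma chibar_add (N : xdiag) : zmod_morphism (@chibar N).
Proof.
move=> p q; elim/(@quotW _ (mod2 (xC N))): p => x.
elim/(@quotW _ (mod2 (xC N))): q => y.
by rewrite -mod2_piB !chibar_pi (xchi_add N).
Qed.

Section Xi.
Variables (N N' : xdiag) (u : tors2 (alpha N) -> mod2 (gamma N'))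
          (hu : zmod_morphism u).

Definition xi_g (b : xB N) : xB N' := chibar N' (u (psibar b)).

Fact xi_g_add : zmod_morphism xi_g.
Proof.
by move=> a b; rewrite /xi_g (@psibar_add N) hu (@chibar_add N').
Qed.

Fact xi_psi b : (fun _ : xA N => 0 : xA N') (xpsi N b) = xpsi N' (xi_g b).
Proof. by rewrite /xi_g /chibar xpsichi. Qed.

Fact xi_eta a : (fun _ : xC N => 0 : xC N') (xeta N a)
              = xeta N' ((fun _ : xA N => 0 : xA N') a).
Proof. by rewrite (zmod_morph0 (xeta_add N')). Qed.

Fact xi_chi c : xi_g (xchi N c) = xchi N' ((fun _ : xC N => 0 : xC N') c).
Proof.
rewrite /xi_g.
have -> : psibar (xchi N c) = 0 by apply: val_inj; rewrite /= xpsichi.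
by rewrite (zmod_morph0 hu) (zmod_morph0 (@chibar_add N'))
  (zmod_morph0 (xchi_add N')).
Qed.

Definition xi : xmor N N' :=
  XMor (@zmod_morphism_zero (xA N) (xA N')) xi_g_add
       (@zmod_morphism_zero (xC N) (xC N')) xi_psi xi_eta xi_chi.

End Xi.

(* Main.v *)
Require Import Defs.
From HB Require Import structures.
From mathcomp Require Import all_boot all_algebra.
From mathcomp Require Import boolp freeg.
From mathcomp Require classical_sets.

Import GRing.Theory.
Local Open Scope ring_scope.
Local Open Scope quotient_scope.

Section Ext.
Variables (G H K : zmodType) (T S0 : G -> Prop) (t0 : G -> H)
  (phi : G -> K) (phi' : H -> K).
Hypotheses (hphi : zmod_morphism phi) (hphi' : zmod_morphism phi').
Hypothesis S00 : S0 0.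
Hypothesis S0B : forall x y, S0 x -> S0 y -> S0 (x - y).
Hypothesis t0B : forall x y, S0 x -> S0 y -> t0 (x - y) = t0 x - t0 y.
Hypothesis t0phi : forall s, S0 s -> phi' (t0 s) = phi s.
Hypothesis T2 : forall x, T x -> S0 (x *+ 2).
Hypothesis Thalf : forall x, T x -> exists y, phi' y = phi x /\ y *+ 2 = t0 (x *+ 2).

Definition G0 (z : G * H) : Prop := S0 z.1 /\ z.2 = t0 z.1.

Definition valid (Gm : G * H -> Prop) : Prop :=
  [/\ forall x y y', Gm (x,y) -> Gm (x,y') -> y = y',
      forall x y x' y', Gm (x,y) -> Gm (x',y') -> Gm (x - x', y - y'),
      forall s, S0 s -> Gm (s, t0 s)
    & forall x y, Gm (x,y) -> phi' y = phi x].

Lemma valid_G0 : valid G0.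
Proof.
split.
- by move=> x y y' [_ /= ->] [_ /= ->].
- move=> x y x' y' [/= Sx ->] [/= Sx' ->]; split => /=; first exact: S0B.
  by rewrite t0B.
- by move=> s Ss; split.
- by move=> x y [/= Sx ->]; apply: t0phi.
Qed.

Lemma valid_ext (X Y : G * H -> Prop) : (forall z, X z <-> Y z) -> valid X -> valid Y.
Proof.
move=> e [h1 h2 h3 h4]; split.
- move=> x y y' a b; apply: (h1 x); by apply/e.
- move=> x y x' y' a b; apply/e; apply: h2; by apply/e.
- move=> s ?; apply/e; exact: h3.
- move=> x y a; apply: h4; by apply/e.
Qed.

Definition PP (A : G * H -> Prop) : Prop := valid (fun z => A z \/ G0 z).

Lemma chainP (F : (G * H -> Prop) -> Prop) :
  (forall X, F X -> PP X) ->
  classical_sets.total_on F (@classical_sets.subset _) ->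
  PP (classical_sets.bigcup F id).
Proof.
move=> FP Ftot.
set U := (fun z => classical_sets.bigcup F id z \/ G0 z).
have common : forall z1 z2, U z1 -> U z2 ->
    exists Y, [/\ valid Y, Y z1, Y z2 & forall z, Y z -> U z].
  have sub X : F X -> forall z, X z \/ G0 z -> U z.
    by move=> FX z [Xz|Gz]; [left; exists X | right].
  move=> z1 z2 [[X1 FX1 X1z]|G1] [[X2 FX2 X2z]|G2].
  - have [s12|s21] := Ftot _ _ FX1 FX2.
    + exists (fun z => X2 z \/ G0 z); split; [exact: FP|left; exact: s12|by left|].
      exact: sub.
    + exists (fun z => X1 z \/ G0 z); split; [exact: FP|by left|left; exact: s21|].
      exact: sub.
  - exists (fun z => X1 z \/ G0 z); split; [exact: FP|by left|by right|exact: sub].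
  - exists (fun z => X2 z \/ G0 z); split; [exact: FP|by right|by left|exact: sub].
  - exists G0; split => //; [exact: valid_G0|by move=> z Gz; right].
rewrite /PP -/U; split.
- move=> x y y' u1 u2; have [Y [[h1 _ _ _] Y1 Y2 _]] := common _ _ u1 u2.
  exact: h1 Y1 Y2.
- move=> x y x' y' u1 u2; have [Y [[_ h2 _ _] Y1 Y2 YU]] := common _ _ u1 u2.
  exact/YU/h2.
- by move=> s Ss; right.
- move=> x y u1; have [Y [[_ _ _ h4] Y1 _ _]] := common _ _ u1 u1.
  exact: h4 Y1.
Qed.

Lemma ext_hom : exists t : G -> H,
  [/\ forall x y, T x -> T y -> t (x - y) = t x - t y,
      forall s, S0 s -> t s = t0 s
    & forall x, T x -> phi' (t x) = phi x].
Proof.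
have [A [PA Amax]] := classical_sets.Zorn_bigcup chainP.
set Gm := (fun z => A z \/ G0 z).
have vG : valid Gm by [].
case: vG => [fun_G sub_G G0_G phi_G].
have dom : forall x, T x -> exists y, Gm (x,y).
  move=> x Tx; apply: contrapT => nod.
  have [y [phiy hy2]] := Thalf x Tx.
  pose A' z := Gm z \/ exists d yd, Gm (d,yd) /\ z = (d + x, yd + y).
  have vA' : valid A'.
    split.
    - move=> x0 y0 y0' [g1|[d [yd [g1 e1]]]] [g2|[d' [yd' [g2 e2]]]].
      + exact: fun_G g1 g2.
      + case: e2 => ex ey; exfalso; apply: nod; exists (y0 - yd').
        have := sub_G _ _ _ _ g1 g2; rewrite ex addrAC subrr add0r.
        by [].
      + case: e1 => ex ey; exfalso; apply: nod; exists (y0' - yd).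
        have := sub_G _ _ _ _ g2 g1; rewrite ex addrAC subrr add0r.
        by [].
      + case: e1 => ex ey; case: e2 => ex' ey'.
        have dd : d = d' by apply: (addIr x); rewrite -ex -ex'.
        rewrite dd in g1; rewrite ey ey' (fun_G _ _ _ g1 g2) //.
    - move=> x1 y1 x2 y2 [g1|[d [yd [g1 e1]]]] [g2|[d' [yd' [g2 e2]]]].
      + by left; apply: sub_G.
      + case: e2 => -> ->; right.
        have g3 := sub_G _ _ _ _ g1 g2.
        have g4 := sub_G _ _ _ _ g3 (G0_G _ (T2 x Tx)).
        rewrite -hy2 in g4.
        exists (x1 - d' - x *+ 2), (y1 - yd' - y *+ 2); split => //.
        by congr pair; rewrite mulr2n !opprD !addrA subrK.
      + case: e1 => -> ->; right; exists (d - x2), (yd - y2); split.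
          exact: sub_G.
        by congr pair; rewrite addrAC.
      + case: e1 => -> ->; case: e2 => -> ->; left.
        move: (sub_G _ _ _ _ g1 g2); congr Gm; congr pair;
          by rewrite opprD addrACA subrr addr0.
    - by move=> s Ss; left; apply: G0_G.
    - move=> x0 y0 [g1|[d [yd [g1 [-> ->]]]]]; first exact: phi_G g1.
      by rewrite (zmod_morphD hphi') (zmod_morphD hphi) (phi_G _ _ g1) phiy.
  have PA' : PP A'.
    apply: valid_ext vA' => z; split; first by left.
    by case=> // Gz; left; right.
  apply: (Amax A') => //; split.
    by move=> z Az; left; left.
  move=> hsub; apply: nod; exists (t0 0 + y).
  have : A' (0 + x, t0 0 + y).
    by right; exists 0, (t0 0); split => //; apply: G0_G.
  by rewrite add0r => /hsub Az; left.
pose t x := match pselect (exists y, Gm (x,y)) with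
  | left e => proj1_sig (cid e) | right _ => 0 end.
have tP x : (exists y, Gm (x,y)) -> Gm (x, t x).
  rewrite /t; case: pselect => // e _; exact: (proj2_sig (cid e)).
exists t; split.
- move=> x y Tx Ty; apply: (fun_G (x - y)).
  + apply/tP; have [y1 g1] := dom _ Tx; have [y2 g2] := dom _ Ty.
    by exists (y1 - y2); apply: sub_G g1 g2.
  + by apply: sub_G; apply/tP/dom.
- move=> s Ss; apply: (fun_G s); last exact: G0_G.
  by apply/tP; exists (t0 s); apply: G0_G.
- by move=> x Tx; apply: (phi_G x); apply/tP/dom.
Qed.
End Ext.

Set Implicit Arguments.
Unset Strict Implicit.
Unset Printing Implicit Defensive.

Record subgrp (U : zmodType) := SubGrp {
  sgP : U -> Prop;
  sg0 : sgP 0;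
  sgB : forall x y, sgP x -> sgP y -> sgP (x - y) }.

Arguments sgP {U}.
Arguments sg0 {U}.
Arguments sgB {U}.

Section QuotZ.
Variables (U : zmodType) (S : subgrp U).
Local Notation P := (sgP S).

Lemma sgN x : P x -> P (- x).
Proof. by move=> h; rewrite -sub0r; apply: sgB => //; apply: sg0. Qed.
Lemma sgD x y : P x -> P y -> P (x + y).
Proof. by move=> hx hy; rewrite -[y]opprK; apply: sgB => //; apply: sgN. Qed.

Definition qrel (x y : U) : bool := `[< P (x - y) >].
Lemma qrelP x y : reflect (P (x - y)) (qrel x y).
Proof. exact: asboolP. Qed.

Fact qrel_refl : reflexive qrel.
Proof. by move=> x; apply/qrelP; rewrite subrr; apply: sg0. Qed.
Fact qrel_sym : symmetric qrel.
Proof.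
by move=> x y; apply/qrelP/qrelP => h; rewrite -opprB; apply: sgN.
Qed.
Fact qrel_trans : transitive qrel.
Proof.
move=> y x z /qrelP a /qrelP b; apply/qrelP.
by have := sgD a b; rewrite addrA subrK.
Qed.

Canonical qrel_equiv := EquivRel qrel qrel_refl qrel_sym qrel_trans.

Definition quotz := {eq_quot qrel}.
HB.instance Definition _ := Choice.on quotz.
HB.instance Definition _ := Quotient.on quotz.

Lemma repr_piq (x : U) : P (repr (\pi_quotz x) - x).
Proof. by apply/qrelP; apply/eqmodP; rewrite reprK. Qed.

Lemma piq_eq x y : (\pi_quotz x = \pi_quotz y) <-> P (x - y).
Proof. by split => [/eqmodP/qrelP|h]; [|apply/eqmodP/qrelP]. Qed.

Definition q_zero : quotz := \pi_quotz 0.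
Definition q_add (p q : quotz) : quotz := \pi_quotz (repr p + repr q).
Definition q_opp (p : quotz) : quotz := \pi_quotz (- repr p).

Lemma q_addpi x y : q_add (\pi_quotz x) (\pi_quotz y) = \pi_quotz (x + y).
Proof.
apply/piq_eq; have a := repr_piq x; have b := repr_piq y.
by have := sgD a b; rewrite opprD addrACA.
Qed.

Lemma q_opppi x : q_opp (\pi_quotz x) = \pi_quotz (- x).
Proof.
apply/piq_eq; have a := repr_piq x.
by have := sgN a; rewrite opprB opprK addrC.
Qed.

Fact q_addA : associative q_add.
Proof.
move=> x y z; elim/(@quotW _ quotz): x => x; elim/(@quotW _ quotz): y => y;
  elim/(@quotW _ quotz): z => z.
by rewrite !q_addpi addrA.
Qed.
Fact q_addC : commutative q_add.
Proof.
move=> x y; elim/(@quotW _ quotz): x => x; elim/(@quotW _ quotz): y => y.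
by rewrite !q_addpi addrC.
Qed.
Fact q_add0 : left_id q_zero q_add.
Proof. by move=> x; elim/(@quotW _ quotz): x => x; rewrite /q_zero q_addpi add0r. Qed.
Fact q_addN : left_inverse q_zero q_opp q_add.
Proof. by move=> x; elim/(@quotW _ quotz): x => x; rewrite q_opppi q_addpi addNr. Qed.

HB.instance Definition _ :=
  GRing.isZmodule.Build quotz q_addA q_addC q_add0 q_addN.

Lemma piq_add : zmod_morphism (fun x : U => \pi_quotz x : quotz).
Proof.
move=> x y.
have -> : \pi_quotz x - \pi_quotz y = q_add (\pi_quotz x) (q_opp (\pi_quotz y)) :> quotz by [].
by rewrite q_opppi q_addpi.
Qed.

End QuotZ.

Import Num.Theory.

Definition zmw (V : zmodType) : Type := V.
HB.instance Definition _ (V : zmodType) := GRing.Zmodule.on (zmw V).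
Section ZmwLmod.
Variable V : zmodType.
Definition zscale (a : int) (v : zmw V) : zmw V := v *~ a.
Fact zscaleA a b v : zscale a (zscale b v) = zscale (a * b) v.
Proof. by rewrite /zscale mulrzA mulrzAC. Qed.
Fact zscale1 : left_id 1 zscale.
Proof. by move=> v; rewrite /zscale mulr1z. Qed.
Fact zscaleDr : right_distributive zscale +%R.
Proof. by move=> a u v; rewrite /zscale mulrzDl. Qed.
Fact zscaleDl v : {morph zscale^~ v : a b / a + b}.
Proof. by move=> a b; rewrite /zscale mulrzDr. Qed.
HB.instance Definition _ := GRing.Zmodule_isLmodule.Build int (zmw V)
  zscaleA zscale1 zscaleDr zscaleDl.
End ZmwLmod.

Section FreeV.
Variable V : zmodType.
Definition FV := {freeg (zmw V) / int}.
Definition pF (x : FV) : zmw V := fglift (fun v : zmw V => v) x.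

Lemma pF_add : zmod_morphism pF.
Proof. exact: lift_is_additive. Qed.

Lemma pF_U (v : zmw V) : pF << v >> = v.
Proof. by rewrite /pF liftU; exact: zscale1. Qed.

Lemma FV_tf (x : FV) : x *+ 2 = 0 -> x = 0.
Proof.
move=> h; apply/eqP/freeg_eqP => z; have := congr1 (coeff z) h.
by rewrite coeffMn coeff0 => /eqP; rewrite mulrn_eq0 /= => /eqP.
Qed.
End FreeV.

Lemma mod2_2 (C : zmodType) (q : mod2 C) : q + q = 0.
Proof.
elim/(@quotW _ (mod2 C)): q => c.
have -> : \pi_(mod2 C) c + \pi_(mod2 C) c = mod2_add (\pi_(mod2 C) c) (\pi_(mod2 C) c) by [].
rewrite mod2_addpi; apply/eqmodP/mod2relP; exists c.
by rewrite subr0 mulr2n.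
Qed.

Lemma mod2_piD (C : zmodType) (x y : C) :
  \pi_(mod2 C) (x + y) = \pi_(mod2 C) x + \pi_(mod2 C) y.
Proof. by rewrite -mod2_addpi. Qed.

Lemma mod2_N (C : zmodType) (q : mod2 C) : - q = q.
Proof. by apply/eqP; rewrite -subr_eq0 -opprD mod2_2 oppr0. Qed.

Section PairLemmas.
Variables (U1 U2 : zmodType).
Lemma pr1B (z w : (U1 * U2)%type) : (z - w).1 = z.1 - w.1. Proof. by []. Qed.
Lemma pr2B (z w : (U1 * U2)%type) : (z - w).2 = z.2 - w.2. Proof. by []. Qed.
Lemma pr1D (z w : (U1 * U2)%type) : (z + w).1 = z.1 + w.1. Proof. by []. Qed.
Lemma pr2D (z w : (U1 * U2)%type) : (z + w).2 = z.2 + w.2. Proof. by []. Qed.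
End PairLemmas.

Section Construct.
Variable D : ediag.
Local Notation A := (eA D).
Local Notation C := (eC D).
Local Notation eta := (eeta D).
Local Notation V := (tors2 A).
Local Notation F := (FV V).

Definition pp (x : F) : A := t2val (pF x : V).

Lemma pp_add : zmod_morphism pp.
Proof. by move=> x y; rewrite /pp pF_add. Qed.

Lemma pp2 x : pp x *+ 2 = 0.
Proof. exact/eqP/(t2P (pF x : V)). Qed.

Lemma ppU (v : V) : pp << (v : zmw V) >> = v.
Proof. by rewrite /pp pF_U. Qed.

Definition S0c (s : F) : Prop := exists z, s = z *+ 2.
Definition half (s : F) : F :=
  match pselect (S0c s) with left e => proj1_sig (cid e) | right _ => 0 end.
Lemma half2 z : half (z *+ 2) = z.
Proof.
rewrite /half; case: pselect => [e|ne]; last by exfalso; apply: ne; exists z.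
case: (cid e) => w /= hw; apply/eqP; rewrite -subr_eq0; apply/eqP/FV_tf.
by rewrite mulrnBl -hw subrr.
Qed.

Definition t0c (s : F) : mod2 C := \pi_(mod2 C) (eta (pp (half s))).
Definition Tc (x : F) : Prop := pp x = 0.

Lemma theta_ex : exists t : F -> mod2 C,
  [/\ forall x y, Tc x -> Tc y -> t (x - y) = t x - t y,
      forall s, S0c s -> t s = t0c s
    & forall x, Tc x -> (fun _ : mod2 C => 0 : mod2 C) (t x) = (fun _ : F => 0 : mod2 C) x].
Proof.
apply: ext_hom.
- exact: zmod_morphism_zero.
- exact: zmod_morphism_zero.
- by exists 0; rewrite mul0rn.
- by move=> x y [a ->] [b ->]; exists (a - b); rewrite mulrnBl.
- move=> x y [a ->] [b ->]; rewrite -mulrnBl /t0c !half2 pp_add (eeta_add D).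
  exact: mod2_piB.
- by [].
- by move=> x _; exists x.
- move=> x Tx; exists 0; split => //.
  rewrite mul0rn /t0c half2 Tx (zmod_morph0 (eeta_add D)); by [].
Qed.

Definition theta : F -> mod2 C := proj1_sig (cid theta_ex).
Lemma thetaB x y : Tc x -> Tc y -> theta (x - y) = theta x - theta y.
Proof. case: (proj2_sig (cid theta_ex)) => h _ _; exact: h. Qed.
Lemma thetaS s : S0c s -> theta s = t0c s.
Proof. case: (proj2_sig (cid theta_ex)) => _ h _; exact: h. Qed.
Lemma Tc0 : Tc 0.
Proof. exact: (zmod_morph0 pp_add). Qed.
Lemma theta0 : theta 0 = 0.
Proof. by have := thetaB Tc0 Tc0; rewrite subr0 subrr. Qed.
Lemma thetaN x : Tc x -> theta (- x) = - theta x.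
Proof.
move=> Tx; have := thetaB Tc0 Tx; rewrite theta0 !sub0r; exact.
Qed.

Definition Mp (z : (C * F)%type) : Prop := pp z.2 = 0 /\ \pi_(mod2 C) z.1 = theta z.2.
Lemma Mp0 : Mp 0.
Proof. by split; [exact: Tc0|rewrite theta0]. Qed.
Lemma MpB x y : Mp x -> Mp y -> Mp (x - y).
Proof.
move=> [h1 h2] [h3 h4]; split => /=; first by rewrite pp_add h1 h3 subrr.
by rewrite mod2_piB h2 h4 thetaB.
Qed.
Definition Msg : subgrp (C * F)%type := SubGrp Mp0 MpB.

Definition Bt := quotz Msg.
Definition chiN (c : C) : Bt := \pi_Bt (c, 0).
Definition psiN (b : Bt) : A := pp (repr b).2.

Lemma psiN_pi z : psiN (\pi_Bt z) = pp z.2.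
Proof.
have [h _] := repr_piq Msg z; move: h => /=.
by rewrite pp_add => /eqP; rewrite subr_eq0 => /eqP.
Qed.

Lemma chiN_add : zmod_morphism chiN.
Proof.
move=> x y; rewrite /chiN -piq_add.
have -> : ((x, 0) - (y, 0) : (C * F)%type) = (x - y, 0 - 0) by [].
by rewrite subr0.
Qed.

Lemma psiN_add : zmod_morphism psiN.
Proof.
move=> x y; elim/(@quotW _ Bt): x => x; elim/(@quotW _ Bt): y => y.
by rewrite -piq_add !psiN_pi pr2B pp_add.
Qed.

Lemma psichiN c : psiN (chiN c) = 0.
Proof. by rewrite psiN_pi /= Tc0. Qed.

Lemma chietapsiN b : chiN (eta (psiN b)) = b *+ 2.
Proof.
elim/(@quotW _ Bt): b => z; rewrite psiN_pi mulr2n -(zmod_morphD (@piq_add _ Msg)).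
rewrite /chiN; apply/piq_eq; split; rewrite ?pr1B ?pr2B ?pr1D ?pr2D /=.
  by rewrite sub0r (zmod_morphN pp_add) (zmod_morphD pp_add) -mulr2n pp2 oppr0.
have T2 : Tc (z.2 + z.2) by rewrite /Tc (zmod_morphD pp_add) -mulr2n pp2.
rewrite sub0r thetaN // -mulr2n thetaS; last by exists z.2.
rewrite /t0c half2 mod2_piB (_ : \pi_(mod2 C) (z.1 *+ 2) = 0) ?subr0 ?mod2_N //.
by apply/eqmodP/mod2relP; exists z.1; rewrite subr0.
Qed.

Definition NN : xdiag :=
  @XDiag A Bt C eta chiN psiN (eeta_add D) chiN_add psiN_add (@eeta2 D)
    psichiN chietapsiN.

Lemma NN_exact : xexact NN.
Proof.
split.
- move=> q1 q2; rewrite /chibar /= /chiN => /piq_eq [_ /=].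
  by rewrite subr0 theta0 mod2_piB !reprK => /eqP; rewrite subr_eq0 => /eqP.
- move=> b; split.
  + elim/(@quotW _ Bt): b => z /(congr1 val) /=; rewrite psiN_pi => hz.
    exists (\pi_(mod2 C) (z.1 - repr (theta z.2))).
    transitivity (chiN (z.1 - repr (theta z.2))); first exact: (chibar_pi (N:=NN)).
    rewrite /chiN; apply/piq_eq; split => /=.
      by rewrite sub0r (zmod_morphN pp_add) hz oppr0.
    rewrite sub0r thetaN // addrAC subrr sub0r.
    by rewrite -mod2_opppi reprK.
  + by case=> q <-; apply: val_inj => /=; rewrite /chibar psichiN.
- move=> a; exists (\pi_Bt (0, << (a : zmw V) >>)); apply: val_inj => /=.
  by rewrite psiN_pi ppU.
Qed.

Definition isoF : emor (piD NN) D :=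
  @EMor (piD NN) D (fun x => x) (fun x => x) (@zmod_morphism_id _)
    (@zmod_morphism_id _) (fun _ => erefl).
Definition isoB : emor D (piD NN) :=
  @EMor D (piD NN) (fun x => x) (fun x => x) (@zmod_morphism_id _)
    (@zmod_morphism_id _) (fun _ => erefl).

Lemma iso_NN : eiso isoF.
Proof. by exists isoB; split; split. Qed.

End Construct.

Lemma part1 (D : ediag) :
  exists N : xdiag, xexact N /\ exists p : emor (piD N) D, eiso p.
Proof. exists (NN D); split; [exact: NN_exact|exists (isoF D); exact: iso_NN]. Qed.


Lemma chibar0 (N : xdiag) : chibar N 0 = 0.
Proof. exact: (zmod_morph0 (@chibar_add N)). Qed.

Lemma pi_mod2_eq0 (C : zmodType) (c : C) :
  \pi_(mod2 C) c = 0 -> exists d, c = d *+ 2.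
Proof.
move=> h; have : \pi_(mod2 C) c = \pi_(mod2 C) 0 by [].
by move/eqmodP/mod2relP => [d]; rewrite subr0 => ->; exists d.
Qed.

Lemma chi_wd (N : xdiag) (ex : xexact N) c1 c2 :
  xchi N c1 = xchi N c2 -> exists d, c1 - c2 = d *+ 2.
Proof.
case: ex => inj _ _ h.
have : chibar N (\pi_(mod2 (xC N)) c1) = chibar N (\pi_(mod2 (xC N)) c2).
  by rewrite !chibar_pi.
move/inj => /eqP; rewrite -subr_eq0 -mod2_piB => /eqP; exact: pi_mod2_eq0.
Qed.

Lemma ker_psi (N : xdiag) (ex : xexact N) b :
  xpsi N b = 0 -> exists c, b = xchi N c.
Proof.
case: ex => _ ker _ h.
have : psibar b = 0 by apply: val_inj.
move/ker => [q <-]; by exists (repr q).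
Qed.

Lemma psi_sur (N : xdiag) (ex : xexact N) (a : xA N) :
  a *+ 2 = 0 -> exists b, xpsi N b = a.
Proof.
case: ex => _ _ sur h.
have [b hb] := sur (@Tors2 _ a (introT eqP h)).
by exists b; rewrite -[xpsi N b]/(t2val (psibar b)) hb.
Qed.

Section Part2.
Variables (N N' : xdiag) (ex : xexact N) (ex' : xexact N') (p : xmor N N')
  (q : emor (piD N') (piD N)).
Hypothesis qf1 : forall a, ef q (mf p a) = a.
Hypothesis qh1 : forall c, eh q (mh p c) = c.
Hypothesis qf2 : forall a, mf p (ef q a) = a.
Hypothesis qh2 : forall c, mh p (eh q c) = c.

Local Notation g := (mg p).

Lemma g_inj0 b : g b = 0 -> b = 0.
Proof.
move=> gb.
have : xpsi N b = 0.
  by rewrite -[xpsi N b]qf1 mfpsi gb (zmod_morph0 (xpsi_add N'))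
     (zmod_morph0 (ef_add q)).
move/(ker_psi ex) => [c bc]; rewrite bc in gb *.
rewrite mgchi in gb.
have : xchi N' (mh p c) = xchi N' 0 by rewrite gb (zmod_morph0 (xchi_add N')).
move/(chi_wd ex') => [d]; rewrite subr0 => hd.
by rewrite -[c]qh1 hd (zmod_morphMn (eh_add q)) (zmod_morphMn (xchi_add N)) xchi2.
Qed.

Lemma g_inj : injective g.
Proof.
move=> b1 b2 h; apply/eqP; rewrite -subr_eq0; apply/eqP/g_inj0.
by rewrite (mg_add p) h subrr.
Qed.

Lemma g_sur b' : exists b, g b = b'.
Proof.
have [b hb] : exists b, xpsi N b = ef q (xpsi N' b').
  apply: (psi_sur ex).
  by rewrite -(zmod_morphMn (ef_add q)) xpsi2 (zmod_morph0 (ef_add q)).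
have : xpsi N' (b' - g b) = 0.
  by rewrite (xpsi_add N') -mfpsi hb qf2 subrr.
move/(ker_psi ex') => [c' hc'].
exists (b + xchi N (eh q c')).
by rewrite (zmod_morphD (mg_add p)) mgchi qh2 -hc' addrC subrK.
Qed.

Definition g' b' : xB N := proj1_sig (cid (g_sur b')).
Lemma gg' b' : g (g' b') = b'.
Proof. exact: (proj2_sig (cid (g_sur b'))). Qed.

Lemma g'_add : zmod_morphism g'.
Proof. by move=> x y; apply: g_inj; rewrite (mg_add p) !gg'. Qed.

Lemma f_inj : injective (mf p).
Proof. by move=> a1 a2 h; rewrite -[a1]qf1 h qf1. Qed.

Fact g'psi b' : ef q (xpsi N' b') = xpsi N (g' b').
Proof. by apply: f_inj; rewrite qf2 mfpsi gg'. Qed.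
Fact g'eta a : eh q (xeta N' a) = xeta N (ef q a).
Proof. exact: (eheta q). Qed.
Fact g'chi c : g' (xchi N' c) = xchi N (eh q c).
Proof. by apply: g_inj; rewrite gg' mgchi qh2. Qed.

Definition pinv : xmor N' N :=
  @XMor N' N (ef q) g' (eh q) (ef_add q) g'_add (eh_add q) g'psi g'eta g'chi.

Lemma p_xiso : xiso p.
Proof.
exists pinv; split; split => //= x.
- by apply: g_inj; rewrite gg'.
- exact: gg'.
Qed.
End Part2.

Lemma part2 (N N' : xdiag) : xexact N -> xexact N' ->
  forall p : xmor N N', eiso (piM p) -> xiso p.
Proof.
move=> ex ex' p [q [[qf1 qh1] [qf2 qh2]]].
exact: (@p_xiso N N' ex ex' p q qf1 qh1 qf2 qh2).
Qed.

Section Part3.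
Variables (N N' : xdiag) (ex : xexact N) (ex' : xexact N').

Lemma xi_addP (u v : tors2 (alpha N) -> mod2 (gamma N'))
  (hu : zmod_morphism u) (hv : zmod_morphism v) :
  xmor_eq (xi (zmod_morphism_add hu hv)) (xadd (xi hu) (xi hv)).
Proof.
split => x /=; first by rewrite addr0.
- by rewrite /xi_g (zmod_morphD (@chibar_add N')).
- by rewrite addr0.
Qed.

Lemma xi_injP (u v : tors2 (alpha N) -> mod2 (gamma N'))
  (hu : zmod_morphism u) (hv : zmod_morphism v) :
  xmor_eq (xi hu) (xi hv) -> forall a, u a = v a.
Proof.
case=> _ hg _ a; case: ex' => inj' _ _; case: ex => _ _ sur.
have [b hb] := sur a; apply: inj'; have := hg b; rewrite /= /xi_g hb; exact.
Qed.

Lemma kerP (p : xmor N N') :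
  ((forall a, mf p a = 0) /\ (forall c, mh p c = 0)) <->
  exists (u : tors2 (alpha N) -> mod2 (gamma N'))
         (hu : zmod_morphism u), xmor_eq p (xi hu).
Proof.
split; last first.
  by case=> u [hu [hf _ hh]]; split => x; [rewrite hf|rewrite hh].
case=> hf hh.
have exq : forall a : tors2 (alpha N), exists qq : mod2 (gamma N'),
    forall b, psibar b = a -> chibar N' qq = mg p b.
  move=> a; case: (ex) => _ _ sur; have [b0 hb0] := sur a.
  have : xpsi N' (mg p b0) = 0 by rewrite -mfpsi hf.
  move=> h0; have : psibar (mg p b0) = 0 by apply: val_inj.
  case: (ex') => _ ker' _ /ker' [qq hqq]; exists qq => b hb.
  rewrite hqq; apply/eqP; rewrite -subr_eq0; apply/eqP.
  rewrite -(mg_add p).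
  have : psibar (b0 - b) = 0 by rewrite (@psibar_add N) hb hb0 subrr.
  case: (ex) => _ ker _ /ker [q1 <-].
  by rewrite /chibar mgchi hh (zmod_morph0 (xchi_add N')).
pose u a := proj1_sig (cid (exq a)).
have uP a b : psibar b = a -> chibar N' (u a) = mg p b.
  exact: (proj2_sig (cid (exq a))).
have hu : zmod_morphism u.
  move=> a1 a2; case: (ex') => inj' _ _; apply: inj'.
  case: (ex) => _ _ sur; have [b1 h1] := sur a1; have [b2 h2] := sur a2.
  rewrite (uP _ (b1 - b2)); last by rewrite (@psibar_add N) h1 h2.
  by rewrite (@chibar_add N') (uP _ _ h1) (uP _ _ h2) (mg_add p).
exists u, hu; split => x /=; [exact: hf| |exact: hh].
by rewrite /xi_g (uP _ x).
Qed.

Section Full.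
Variable q : emor (piD N) (piD N').
Local Notation f := (ef q).
Local Notation h := (eh q).

Definition S0f (b : xB N) : Prop := exists c, b = xchi N c.
Definition t0f (b : xB N) : xB N' :=
  match pselect (S0f b) with
  | left e => xchi N' (h (proj1_sig (cid e))) | right _ => 0 end.

Lemma chih_wd c1 c2 : xchi N c1 = xchi N c2 -> xchi N' (h c1) = xchi N' (h c2).
Proof.
move/(chi_wd ex) => [d hd]; apply/eqP; rewrite -subr_eq0; apply/eqP.
by rewrite -(xchi_add N') -(eh_add q) hd (zmod_morphMn (eh_add q)) (zmod_morphMn (xchi_add N')) xchi2.
Qed.

Lemma t0f_chi c : t0f (xchi N c) = xchi N' (h c).
Proof.
rewrite /t0f; case: pselect => [e|ne]; last by exfalso; apply: ne; exists c.
apply: chih_wd; exact: (esym (proj2_sig (cid e))).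
Qed.

Lemma full : exists p : xmor N N', emor_eq (piM p) q.
Proof.
have fpsi_add : zmod_morphism (fun b => f (xpsi N b)).
  exact: (zmod_morphism_comp (ef_add q) (xpsi_add N)).
have : exists t : xB N -> xB N',
    [/\ forall x y, True -> True -> t (x - y) = t x - t y,
        forall s, S0f s -> t s = t0f s
      & forall x, True -> xpsi N' (t x) = f (xpsi N x)].
  apply: (@ext_hom (xB N) (xB N') (xA N') (fun _ => True) S0f t0f
   (fun b => f (xpsi N b)) (xpsi N') fpsi_add (xpsi_add N')).
- by exists 0; rewrite (zmod_morph0 (xchi_add N)).
- by move=> x y [c1 ->] [c2 ->]; exists (c1 - c2); rewrite (xchi_add N).
- move=> x y [c1 ->] [c2 ->]; rewrite -(xchi_add N) !t0f_chi.
  by rewrite (eh_add q) (xchi_add N').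
- move=> s [c ->]; rewrite t0f_chi xpsichi /= xpsichi.
  by rewrite (zmod_morph0 (ef_add q)).
- by move=> x _; exists (xeta N (xpsi N x)); rewrite xchietapsi.
- move=> x _.
  have [y hy] : exists y, xpsi N' y = f (xpsi N x).
    apply: (psi_sur ex').
    by rewrite -(zmod_morphMn (ef_add q)) xpsi2 (zmod_morph0 (ef_add q)).
  exists y; split => //.
  rewrite -xchietapsi -xchietapsi t0f_chi hy.
  by rewrite (eheta q).
move=> [t [tB tS tphi]].
have tadd : zmod_morphism t by move=> x y; apply: tB.
have tpsi b : f (xpsi N b) = xpsi N' (t b) by rewrite tphi.
have tchi c : t (xchi N c) = xchi N' (h c).
  by rewrite tS ?t0f_chi //; exists c.
exists (@XMor N N' f t h (ef_add q) tadd (eh_add q) tpsi (eheta q) tchi).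
by split.
Qed.
End Full.

Lemma piM_add (p p' : xmor N N') :
  emor_eq (piM (xadd p p')) (eadd (piM p) (piM p')).
Proof. by split. Qed.

End Part3.

Lemma part4 (M N N' M' : xdiag) :
     xexact M -> xexact N -> xexact N' -> xexact M' ->
     forall (p : xmor M N) (q : xmor N' M')
            (u : tors2 (alpha N) -> mod2 (gamma N')) (hu : zmod_morphism u),
       xmor_eq (xcomp q (xcomp (xi hu) p))
               (xi (zmod_morphism_comp (mod2map_add (mh_add q))
                      (zmod_morphism_comp hu (tors2map_add (mf_add p))))).
Proof.
move=> _ _ _ _ p q u hu; split => x /=.
- exact: (zmod_morph0 (mf_add q)).
- rewrite /xi_g /chibar mgchi.
  have -> : psibar (mg p x) = tors2map (mf_add p) (psibar x).
    by apply: val_inj => /=; rewrite mfpsi.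
  rewrite /mod2map.
  by rewrite -[xchi M' (repr (\pi_(mod2 (xC M')) _))]/(chibar M' _) chibar_pi.
- exact: (zmod_morph0 (mh_add q)).
Qed.

Theorem proposition3p7 :
  (* pi : EEED -> ED is essentially surjective *)
  (forall D : ediag,
     exists N : xdiag, xexact N /\ exists p : emor (piD N) D, eiso p)
  /\
  (* pi reflects isomorphisms *)
  (forall N N' : xdiag, xexact N -> xexact N' ->
     forall p : xmor N N', eiso (piM p) -> xiso p)
  /\
  (* the short exact sequence
     0 -> Hom(alpha(N)[2], gamma(N')/2) --xi--> EEED(N,N') --pi--> ED(pi N, pi N') -> 0 *)
  (forall N N' : xdiag, xexact N -> xexact N' ->
     [/\ (* xi is a group homomorphism *)
         forall (u v : tors2 (alpha N) -> mod2 (gamma N'))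
                (hu : zmod_morphism u) (hv : zmod_morphism v),
           xmor_eq (xi (zmod_morphism_add hu hv)) (xadd (xi hu) (xi hv)),
         (* xi is injective *)
         forall (u v : tors2 (alpha N) -> mod2 (gamma N'))
                (hu : zmod_morphism u) (hv : zmod_morphism v),
           xmor_eq (xi hu) (xi hv) -> forall a, u a = v a,
         (* exactness in the middle: ker pi = im xi *)
         forall p : xmor N N',
           ((forall a, mf p a = 0) /\ (forall c, mh p c = 0)) <->
           exists (u : tors2 (alpha N) -> mod2 (gamma N'))
                  (hu : zmod_morphism u), xmor_eq p (xi hu),
         (* pi is surjective on Hom-sets *)
         forall q : emor (piD N) (piD N'),
           exists p : xmor N N', emor_eq (piM p) q
       & (* pi is a group homomorphism on Hom-sets *)
         forall p q : xmor N N',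
           emor_eq (piM (xadd p q)) (eadd (piM p) (piM q))])
  /\
  (* naturality of xi in N and N' *)
  (forall M N N' M' : xdiag,
     xexact M -> xexact N -> xexact N' -> xexact M' ->
     forall (p : xmor M N) (q : xmor N' M')
            (u : tors2 (alpha N) -> mod2 (gamma N')) (hu : zmod_morphism u),
       xmor_eq (xcomp q (xcomp (xi hu) p))
               (xi (zmod_morphism_comp (mod2map_add (mh_add q))
                      (zmod_morphism_comp hu (tors2map_add (mf_add p)))))).
Proof.
split; first exact: part1.
split; first exact: part2.
split.
- move=> N N' ex ex'; split.
  + exact: xi_addP.
  + exact: xi_injP.
  + exact: kerP.
  + exact: full.
  + exact: piM_add.
- move=> M N N' M'; exact: part4.
Qed.
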